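(* Let $G$ be an infinite group and let $k$ be a field. Then for every integer $n\ge1$ the following are equivalent: (i) every stably injective $\tau\in\mathrm{LNUCA}_c(G,k^n)$ is surjective; (ii) the ring $\mathrm{LNUCA}_c(G,k^n)$ is directly finite; (iii) the ring $M_n(D^1(k[G]))$ is directly finite.
   Context: For $V=k^n$, $g\in G$, $x\in V^G$: $(gx)(h)=x(g^{-1}h)$. For finite $M\subset G$, $S=\mathcal{L}(V^M,V)$, $s\in S^G$: $\sigma_s(x)(g)=s(g)((g^{-1}x)\vert_M)$. $\mathrm{LNUCA}_c(G,V)$ is the set of $\sigma_s$ with $M$ finite and $s$ constant outside a finite subset of $G$; it is a ring with pointwise addition and composition. $\Sigma(s)$ is the closure of $\{gs:g\in G\}$ in $S^G$ (prodiscrete topology); $\sigma_s$ is stably injective if $\sigma_p$ is injective for all $p\in\Sigma(s)$. A ring is directly finite if $ab=1$ implies $ba=1$. $D^1(k[G])=k[G]\times(k[G])[G]$ ($(k[G])[G]$ = finitely supported maps $G\to k[G]$) with componentwise addition and multiplication $(\alpha_1,\beta_1)*(\alpha_2,\beta_2)=(\alpha_1\alpha_2,\alpha_1\beta_2+\beta_1\alpha_2+\beta_1\beta_2)$, where $\alpha_1\alpha_2$ is the group ring product and $(\alpha\beta)(g)(h)=\sum_t\alpha(t)\beta(gt)(t^{-1}h)$, $(\beta\alpha)(g)(h)=\sum_t\beta(g)(t)\alpha(t^{-1}h)$, $(\beta\gamma)(g)(h)=\sum_t\beta(g)(t)\gamma(gt)(t^{-1}h)$. *)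

(* Defs.v *)
From HB Require Import structures.
From mathcomp Require Import all_boot all_order all_algebra.
From mathcomp Require Import monoid.
From mathcomp Require Import finmap.
From mathcomp Require Import boolp classical_sets cardinality fsbigop.

Set Implicit Arguments.
Unset Strict Implicit.
Unset Printing Implicit Defensive.

Import GRing.Theory.
Local Open Scope fset_scope.
Local Open Scope classical_set_scope.
Local Open Scope ring_scope.

Section LNUCA.
Variables (G : groupType) (k : fieldType) (n : nat).

Definition V := 'rV[k]_n.
Definition config := G -> V.

Definition shift (g : G) (x : config) : config :=
  fun h => x ((g^-1)%g * h)%g.

Definition Srule (M : {fset G}) := {linear {ffun M -> V} -> V}.

Definition restr (M : {fset G}) (x : config) : {ffun M -> V} :=
  [ffun m : M => x (val m)].

Definition sigma (M : {fset G}) (s : G -> Srule M) (x : config) : config :=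
  fun g => s g (restr M (shift (g^-1)%g x)).

Definition const_off_finite (M : {fset G}) (s : G -> Srule M) : Prop :=
  exists (E : {fset G}) (c : Srule M), forall g, g \notin E -> s g = c.

Definition LNUCA_c (tau : config -> config) : Prop :=
  exists (M : {fset G}) (s : G -> Srule M),
    const_off_finite s /\ forall x, tau x = sigma s x.

Definition shift_rule (M : {fset G}) (g : G) (s : G -> Srule M) : G -> Srule M :=
  fun h => s ((g^-1)%g * h)%g.

(* Sigma(s): the closure of the orbit {g s} in S^G for the prodiscrete
   topology; the basic open neighbourhoods of p are the cylinders
   {q | q = p on F}, F a finite subset of G. *)
Definition Sigma (M : {fset G}) (s : G -> Srule M) (p : G -> Srule M) : Prop :=
  forall F : {fset G}, exists g : G, forall h, h \in F -> p h = shift_rule g s h.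

Definition stably_injective (M : {fset G}) (s : G -> Srule M) : Prop :=
  forall p, Sigma s p -> injective (sigma p).

Definition LNUCA_c_directly_finite : Prop :=
  forall a b : config -> config, LNUCA_c a -> LNUCA_c b ->
    (forall x, a (b x) = x) -> (forall x, b (a x) = x).

End LNUCA.

Section D1.
Variables (G : groupType) (k : fieldType).

Definition kG := G -> k.
Definition fin_supp (a : kG) : Prop := finite_set [set g | a g != 0].

Definition kGG := G -> kG.
Definition fin_supp2 (b : kGG) : Prop :=
  finite_set [set g | b g <> (fun _ => 0)] /\ forall g, fin_supp (b g).

Definition kG_add (a1 a2 : kG) : kG := fun h => a1 h + a2 h.
Definition kGG_add (b1 b2 : kGG) : kGG := fun g => kG_add (b1 g) (b2 g).

Definition kG_mul (a1 a2 : kG) : kG :=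
  fun h => \sum_(t \in [set: G]) a1 t * a2 ((t^-1)%g * h)%g.
Definition mul_ab (a : kG) (b : kGG) : kGG :=
  fun g h => \sum_(t \in [set: G]) a t * b (g * t)%g ((t^-1)%g * h)%g.
Definition mul_ba (b : kGG) (a : kG) : kGG :=
  fun g h => \sum_(t \in [set: G]) b g t * a ((t^-1)%g * h)%g.
Definition mul_bb (b c : kGG) : kGG :=
  fun g h => \sum_(t \in [set: G]) b g t * c (g * t)%g ((t^-1)%g * h)%g.

Definition D1 := (kG * kGG)%type.
Definition inD1 (x : D1) : Prop := fin_supp x.1 /\ fin_supp2 x.2.

Definition D1_zero : D1 := (fun _ => 0, fun _ _ => 0).
Definition D1_one : D1 := (fun h => if h == 1%g then 1 else 0, fun _ _ => 0).
Definition D1_add (x y : D1) : D1 := (kG_add x.1 y.1, kGG_add x.2 y.2).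
Definition D1_mul (x y : D1) : D1 :=
  (kG_mul x.1 y.1,
   kGG_add (kGG_add (mul_ab x.1 y.2) (mul_ba x.2 y.1)) (mul_bb x.2 y.2)).

Definition mxD1 (n : nat) := 'I_n -> 'I_n -> D1.
Definition in_mxD1 (n : nat) (A : mxD1 n) : Prop := forall i j, inD1 (A i j).
Definition mxD1_one (n : nat) : mxD1 n :=
  fun i j => if i == j then D1_one else D1_zero.
Definition mxD1_mul (n : nat) (A B : mxD1 n) : mxD1 n :=
  fun i j => \big[D1_add/D1_zero]_(l < n) D1_mul (A i l) (B l j).

Definition mxD1_directly_finite (n : nat) : Prop :=
  forall A B : mxD1 n, in_mxD1 A -> in_mxD1 B ->
    mxD1_mul A B = @mxD1_one n -> mxD1_mul B A = @mxD1_one n.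

End D1.

(* Main.v *)
Require Import Defs.
From HB Require Import structures.
From mathcomp Require Import all_boot all_order all_algebra.
From mathcomp Require Import monoid.
From mathcomp Require Import finmap.
From mathcomp Require Import boolp classical_sets cardinality fsbigop functions.

Set Implicit Arguments.
Unset Strict Implicit.
Unset Printing Implicit Defensive.
Import GRing.Theory.
Local Open Scope ring_scope.

Section Basics.
Variables (G : groupType) (k : fieldType) (n : nat).
Local Notation Vn := (V k n).
Local Notation cfg := (config G k n).

Lemma cfgD (x y : cfg) g : (x + y) g = x g + y g. Proof. by []. Qed.
Lemma cfgZ a (x : cfg) g : (a *: x) g = a *: x g. Proof. by []. Qed.
Lemma cfgN (x : cfg) g : (- x) g = - x g. Proof. by []. Qed.
Lemma cfgB (x y : cfg) g : (x - y) g = x g - y g. Proof. by []. Qed.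
Lemma cfg0 g : (0 : cfg) g = 0. Proof. by []. Qed.

Lemma shiftM (a b : G) (x : cfg) : shift a (shift b x) = shift (a * b)%g x.
Proof. by apply/funext => h; rewrite /shift invgM mulgA. Qed.

Lemma shift1 (x : cfg) : shift 1%g x = x.
Proof. by apply/funext => h; rewrite /shift invg1 mul1g. Qed.

Lemma shiftK (g : G) (x : cfg) : shift g^-1%g (shift g x) = x.
Proof. by rewrite shiftM mulVg shift1. Qed.

Lemma shiftKV (g : G) (x : cfg) : shift g (shift g^-1%g x) = x.
Proof. by rewrite shiftM mulgV shift1. Qed.

Lemma restr_shift (M : {fset G}) (g : G) (x : cfg) (m : M) :
  restr M (shift g^-1%g x) m = x (g * val m)%g.
Proof. by rewrite ffunE /shift invgK. Qed.

Lemma sigma_local (M : {fset G}) (s : G -> Srule k n M) (x y : cfg) g :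
  (forall m, m \in M -> x (g * m)%g = y (g * m)%g) -> sigma s x g = sigma s y g.
Proof.
move=> H; rewrite /sigma; congr (s g _); apply/ffunP => m.
by rewrite !restr_shift H ?fsvalP.
Qed.

Lemma restrD (M : {fset G}) (x y : cfg) : restr M (x + y) = restr M x + restr M y.
Proof. by apply/ffunP => m; rewrite !ffunE. Qed.
Lemma restrZ (M : {fset G}) a (x : cfg) : restr M (a *: x) = a *: restr M x.
Proof. by apply/ffunP => m; rewrite !ffunE. Qed.
Lemma restrN (M : {fset G}) (x : cfg) : restr M (- x) = - restr M x.
Proof. by apply/ffunP => m; rewrite !ffunE. Qed.
Lemma restr0 (M : {fset G}) : restr M (0 : cfg) = 0.
Proof. by apply/ffunP => m; rewrite !ffunE. Qed.

Lemma shiftD g (x y : cfg) : shift g (x + y) = shift g x + shift g y.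
Proof. by rewrite /shift; apply: funext => h. Qed.
Lemma shiftZ g a (x : cfg) : shift g (a *: x) = a *: shift g x.
Proof. by rewrite /shift; apply: funext => h. Qed.
Lemma shiftN g (x : cfg) : shift g (- x) = - shift g x.
Proof. by rewrite /shift; apply: funext => h. Qed.

Lemma sigmaD (M : {fset G}) (s : G -> Srule k n M) (x y : cfg) :
  sigma s (x + y) = sigma s x + sigma s y.
Proof. by apply/funext => g; rewrite /sigma shiftD restrD linearD. Qed.
Lemma sigmaZ (M : {fset G}) (s : G -> Srule k n M) a (x : cfg) :
  sigma s (a *: x) = a *: sigma s x.
Proof. by apply/funext => g; rewrite /sigma shiftZ restrZ linearZ. Qed.
Lemma sigmaN (M : {fset G}) (s : G -> Srule k n M) (x : cfg) :
  sigma s (- x) = - sigma s x.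
Proof. by apply/funext => g; rewrite /sigma shiftN restrN linearN. Qed.
Lemma sigma0 (M : {fset G}) (s : G -> Srule k n M) : sigma s 0 = 0.
Proof. by have := sigmaZ s 0 0; rewrite !scale0r. Qed.
Lemma sigmaB (M : {fset G}) (s : G -> Srule k n M) (x y : cfg) :
  sigma s (x - y) = sigma s x - sigma s y.
Proof. by rewrite sigmaD sigmaN. Qed.

Lemma sigma_shift_rule (M : {fset G}) (s : G -> Srule k n M) g (x : cfg) :
  sigma (shift_rule g s) x = shift g (sigma s (shift g^-1%g x)).
Proof.
apply/funext => h; rewrite /sigma /shift_rule {2}/shift; congr (s _ _).
by rewrite shiftM invgM invgK mulgK.
Qed.

Lemma sigma_const_shift (M : {fset G}) (c : Srule k n M) g (x : cfg) :
  sigma (fun _ => c) (shift g x) = shift g (sigma (fun _ => c) x).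
Proof.
have := sigma_shift_rule (fun _ => c) g (shift g x).
by rewrite /shift_rule shiftM mulVg shift1 => <-.
Qed.

Lemma sigma_ext (M : {fset G}) (p q : G -> Srule k n M) :
  (forall h, p h = q h) -> sigma p = sigma q.
Proof. by move=> H; have -> : p = q by apply/funext. Qed.

Lemma exists_notin : infinite_set [set: G] -> forall F : {fset G}, exists g, g \notin F.
Proof.
move=> inf F; apply/not_existsP => H; apply: inf.
apply: (finite_subfset F) => g _ /=; move: (H g); by case: (g \in F).
Qed.

End Basics.

Section PartA.
Variables (G : groupType) (k : fieldType) (n : nat).
Local Notation cfg := (config G k n).

Lemma Sigma_char (M : {fset G}) (s : G -> Srule k n M) (E : {fset G}) (c : Srule k n M)
  (p : G -> Srule k n M) :
  (forall g, g \notin E -> s g = c) -> Sigma s p ->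
  (exists g, forall h, p h = shift_rule g s h) \/ (forall h, p h = c).
Proof.
move=> Hc Sig.
case: (pselect (forall h, p h = c)) => [Hall|Hn0]; first by right.
left; move/existsNP: Hn0 => [h0 ph0].
set Gam := [fset (h0 * e^-1)%g | e in E]%fset.
apply: contrapT => Hn.
have Hf : forall g, exists h, p h <> shift_rule g s h.
  by move=> g; apply/existsNP => Hg; apply: Hn; exists g.
have [f Hfp] := boolp.choice Hf.
have [g Hg] := Sig (h0 |` [fset f g | g in Gam])%fset.
have Gg : g \in Gam.
  have := Hg h0; rewrite !inE eqxx /= => /(_ isT) ph.
  apply/imfsetP; exists (g^-1 * h0)%g; last by rewrite invgM invgK mulVKg.
  apply: contraT => /Hc e; by case: ph0; rewrite ph /shift_rule e.
apply: (Hfp g); apply: Hg; rewrite !inE; apply/orP; right.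
by apply/imfsetP; exists g.
Qed.

Lemma const_comp_id (Ma Mb : {fset G}) (sa : G -> Srule k n Ma) (sb : G -> Srule k n Mb)
  (Ea Eb : {fset G}) ca cb :
  infinite_set [set: G] ->
  (forall g, g \notin Ea -> sa g = ca) -> (forall g, g \notin Eb -> sb g = cb) ->
  (forall y, sigma sa (sigma sb y) = y) ->
  forall y : cfg, sigma (fun _ => ca) (sigma (fun _ => cb) y) = y.
Proof.
move=> inf Ha Hb H.
set bad := (Ea `|` [fset (e * m^-1)%g | e in Eb, m in Ma])%fset.
have [g gN] := exists_notin inf bad.
have key : forall y : cfg, sigma (fun _ => ca) (sigma (fun _ => cb) y) g = y g.
  move=> y; rewrite -{2}(H y) [in RHS]/sigma Ha; last first.
    by apply: contra gN => gE; rewrite !inE gE.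
  rewrite /sigma; congr (ca _); apply/ffunP => m; rewrite !restr_shift /=.
  rewrite Hb //; apply: contra gN => gE; rewrite !inE; apply/orP; right.
  apply/imfset2P; exists (g * val m)%g => //; exists (val m); first exact: fsvalP.
  by rewrite mulgK.
move=> y; apply/funext => h.
have := key (shift (g * h^-1)%g y); rewrite !sigma_const_shift /shift.
by rewrite invgM invgK mulgVK.
Qed.

Lemma part_i_ii :
  infinite_set [set: G] ->
  (forall (M : {fset G}) (s : G -> Srule k n M),
       const_off_finite s -> stably_injective s -> (forall y, exists x, sigma s x = y)) ->
  LNUCA_c_directly_finite G k n.
Proof.
move=> inf Hi a b [Ma [sa [[Ea [ca Hca]] Ha]]] [Mb [sb [[Eb [cb Hcb]] Hb]]] ab x.
have ab' : forall y, sigma sa (sigma sb y) = y by move=> y; rewrite -Hb -Ha ab.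
have cc := const_comp_id inf Hca Hcb ab'.
have binj : injective (sigma sb) by move=> x1 x2 e; rewrite -(ab' x1) e ab'.
have SI : stably_injective sb.
  move=> p /(Sigma_char Hcb) [[g Hg]|Hc].
    rewrite (sigma_ext Hg) => x1 x2; rewrite !sigma_shift_rule.
    move=> /(f_equal (shift g^-1%g)); rewrite !shiftK => /binj.
    by move=> /(f_equal (shift g)); rewrite !shiftKV.
  by rewrite (sigma_ext Hc) => x1 x2 e; rewrite -(cc x1) e cc.
have [z Hz] := Hi Mb sb (ex_intro _ Eb (ex_intro _ cb Hcb)) SI x.
by rewrite -Hz -Hb ab.
Qed.

End PartA.

Definition mkLin (k : fieldType) (U W : lmodType k) (f : U -> W) (H : linear f) :
  {linear U -> W} := HB.pack f (GRing.isLinear.Build k U W *:%R f H).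
Lemma mkLinE (k : fieldType) (U W : lmodType k) (f : U -> W) (H : linear f) u :
  mkLin H u = f u.
Proof. by []. Qed.

Lemma stab_nat (f : nat -> nat) i :
  (forall j j', (i <= j)%N -> (j <= j')%N -> (f j' <= f j)%N) ->
  exists J, (i <= J)%N /\ forall j, (J <= j)%N -> f j = f J.
Proof.
move: {2}(f i) (leqnn (f i)) => d; elim: d i => [|d IH] i fid mono.
  exists i; split => // j ij.
  have fi0 : f i = 0%N by apply/eqP; rewrite -leqn0.
  by have := mono i j (leqnn i) ij; rewrite fi0 leqn0 => /eqP.
case: (pselect (forall j, (i <= j)%N -> f j = f i)) => [H|]; first by exists i.
move/existsNP => [j /not_implyP [ij fj]].
have fjlt : (f j < f i)%N.
  by rewrite ltn_neqAle (mono i j (leqnn i) ij) andbT; apply/eqP.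
have fjd : (f j <= d)%N by rewrite -ltnS (leq_trans fjlt).
have [J [jJ HJ]] := IH j fjd (fun a b ja ab => mono a b (leq_trans ij ja) ab).
by exists J; split => //; apply: leq_trans jJ.
Qed.

Section Ext.
Variables (G : groupType) (k : fieldType) (n : nat).
Local Notation Vn := (V k n).
Local Notation cfg := (config G k n).

Definition ext (D : {fset G}) (u : {ffun D -> Vn}) : cfg :=
  fun g => if insub g is Some h then u h else 0.

Lemma ext_val (D : {fset G}) (u : {ffun D -> Vn}) (h : D) : ext u (val h) = u h.
Proof. by rewrite /ext valK. Qed.

Lemma ext_out (D : {fset G}) (u : {ffun D -> Vn}) g : g \notin D -> ext u g = 0.
Proof. by move=> gD; rewrite /ext insubN. Qed.

Lemma ext_in (D : {fset G}) (u : {ffun D -> Vn}) g (gD : g \in D) :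
  ext u g = u [` gD]%fset.
Proof. by rewrite -ext_val. Qed.

Lemma ext_restr (D : {fset G}) (x : cfg) g : g \in D -> ext (restr D x) g = x g.
Proof. by move=> gD; rewrite (ext_in _ gD) ffunE. Qed.

Lemma restr_ext (D : {fset G}) (u : {ffun D -> Vn}) : restr D (ext u) = u.
Proof. by apply/ffunP => h; rewrite ffunE ext_val. Qed.

Lemma ext_lin (D : {fset G}) a (u v : {ffun D -> Vn}) :
  ext (a *: u + v) = a *: ext u + ext v.
Proof.
rewrite /config; apply/funext => g.
rewrite cfgD cfgZ /ext /=; case: insubP => [h _ _|_]; first by rewrite !ffunE.
by rewrite scaler0 addr0.
Qed.

Lemma ext0 (D : {fset G}) : ext (0 : {ffun D -> Vn}) = 0.
Proof. by rewrite /config; apply/funext => g; rewrite /ext; case: insubP => [h _ _|_] //; rewrite ffunE. Qed.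

Lemma restr_lin (D : {fset G}) a (x y : cfg) :
  restr D (a *: x + y) = a *: restr D x + restr D y.
Proof. by apply/ffunP => h; rewrite !ffunE. Qed.

End Ext.

Section ML.
Variables (G : groupType) (k : fieldType) (n : nat).
Local Notation Vn := (V k n).
Local Notation cfg := (config G k n).
Variables (M : {fset G}) (c : Srule k n M).
Local Notation sc := (sigma (fun _ : G => c)).

Definition Bset : {fset G} := (M `|` [fset (m^-1)%g | m in M] `|` [fset 1%g])%fset.
Fixpoint Fb (i : nat) : {fset G} :=
  if i is i'.+1 then [fset (a * b)%g | a in Fb i', b in Bset]%fset else [fset 1%g]%fset.

Lemma one_B : (1%g \in Bset).
Proof. by rewrite !inE eqxx !orbT. Qed.
Lemma M_B m : m \in M -> m \in Bset.
Proof. by move=> mM; rewrite !inE mM. Qed.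
Lemma Minv_B m : m \in M -> (m^-1)%g \in Bset.
Proof. by move=> mM; rewrite !inE; apply/orP; left; apply/orP; right; apply/imfsetP; exists m. Qed.

Lemma F_mulB i g b : g \in Fb i -> b \in Bset -> (g * b)%g \in Fb i.+1.
Proof. by move=> gF bB /=; apply/imfset2P; exists g => //; exists b. Qed.

Lemma F_step i : (Fb i `<=` Fb i.+1)%fset.
Proof. by apply/fsubsetP => g gF; rewrite -(mulg1 g) F_mulB // one_B. Qed.

Lemma F_mono i j : (i <= j)%N -> (Fb i `<=` Fb j)%fset.
Proof.
move=> /subnK <-; elim: (j - i)%N => [|d IH]; first exact: fsubset_refl.
by rewrite addSn (fsubset_trans IH) // F_step.
Qed.

Lemma F_monoP i j g : (i <= j)%N -> g \in Fb i -> g \in Fb j.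
Proof. by move=> ij; apply/fsubsetP/F_mono. Qed.

Lemma F_mul i g m : g \in Fb i -> m \in M -> (g * m)%g \in Fb i.+1.
Proof. by move=> gF mM; apply: F_mulB => //; apply: M_B. Qed.

Lemma F_div i g m : (g * m)%g \in Fb i -> m \in M -> g \in Fb i.+1.
Proof. by move=> gF mM; rewrite -(mulgK m g) F_mulB // Minv_B. Qed.

Lemma one_F i : 1%g \in Fb i.
Proof. by apply: (F_monoP (leq0n i)); rewrite !inE. Qed.

Definition Ker j (x : cfg) := forall h, h \in Fb j -> sc x h = 0.
Definition Ext i j (y : cfg) :=
  exists x, Ker j x /\ forall h, h \in Fb i.+1 -> x h = y h.

Lemma Ker_mono j j' x : (j <= j')%N -> Ker j' x -> Ker j x.
Proof. by move=> jj K h hF; apply: K; apply: F_monoP hF. Qed.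

Lemma Ext_mono i j j' y : (j <= j')%N -> Ext i j' y -> Ext i j y.
Proof. by move=> jj [x [K A]]; exists x; split => //; apply: Ker_mono K. Qed.

Lemma sc_local_F j (x y : cfg) h : h \in Fb j ->
  (forall g, g \in Fb j.+1 -> x g = y g) -> sc x h = sc y h.
Proof. by move=> hF A; apply: sigma_local => m mM; apply: A; apply: F_mul. Qed.

Section Stab.
Variable i : nat.
Local Notation W := {ffun Fb i.+1 -> Vn}.

Definition phiF j (u : {ffun Fb j.+1 -> Vn}) : {ffun Fb j -> Vn} :=
  restr (Fb j) (sc (ext u)).
Lemma phiF_lin j : linear (@phiF j).
Proof. by move=> a u v; rewrite /phiF ext_lin sigmaD sigmaZ restr_lin. Qed.
Definition resF j (u : {ffun Fb j.+1 -> Vn}) : W := restr (Fb i.+1) (ext u).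
Lemma resF_lin j : linear (@resF j).
Proof. by move=> a u v; rewrite /resF ext_lin restr_lin. Qed.

Definition SF j : {vspace W} :=
  (linfun (mkLin (@resF_lin j)) @: lker (linfun (mkLin (@phiF_lin j))))%VS.

Lemma ExtS j y : (i <= j)%N -> Ext i j y <-> restr (Fb i.+1) y \in SF j.
Proof.
move=> ij; split.
  move=> [x [K A]]; apply/memv_imgP; exists (restr (Fb j.+1) x).
    rewrite memv_ker lfunE mkLinE; apply/eqP/ffunP => h.
    rewrite /phiF !ffunE /= -[RHS](K _ (fsvalP h)); apply: sc_local_F; first exact: fsvalP.
    by move=> g gF; rewrite ext_restr.
  rewrite lfunE mkLinE; apply/ffunP => h; rewrite /resF !ffunE ext_restr -?A //.
    exact: fsvalP.
  by apply: F_monoP (fsvalP h).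
move=> /memv_imgP [u]; rewrite memv_ker lfunE mkLinE => /eqP phi0.
rewrite lfunE mkLinE => e; exists (ext u); split.
  move=> h hF; move/ffunP: phi0 => /(_ [` hF]%fset).
  by rewrite /phiF !ffunE.
move=> h hF; move/ffunP: e => /(_ [` hF]%fset).
by rewrite /resF !ffunE.
Qed.

Lemma SF_decr j j' : (i <= j)%N -> (j <= j')%N -> (SF j' <= SF j)%VS.
Proof.
move=> ij jj; apply/subvP => w wS.
have := (ExtS (ext w) (leq_trans ij jj)).2; rewrite restr_ext => /(_ wS) E'.
by have := (ExtS (ext w) ij).1 (Ext_mono jj E'); rewrite restr_ext.
Qed.

Lemma Ext_stab : exists J, (i <= J)%N /\ forall j y, (J <= j)%N -> Ext i J y -> Ext i j y.
Proof.
have [J [iJ HJ]] := stab_nat (f := fun j => \dim (SF j)) (i := i)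
  (fun j j' ij jj => dimvS (SF_decr ij jj)).
exists J; split => // j y Jj.
have ij : (i <= j)%N by apply: leq_trans Jj.
have eqS : SF j = SF J.
  apply/eqP; rewrite eqEdim SF_decr //=; have /= -> := HJ j Jj; exact: leqnn.
move=> /(ExtS _ (leq_trans iJ (leqnn J))); rewrite -eqS => H.
exact: (ExtS _ ij).2.
Qed.

End Stab.

Definition Aall i (y : cfg) := forall j, Ext i j y.

Lemma Aall_step i y : Aall i y ->
  exists y', Aall i.+1 y' /\ forall h, h \in Fb i.+1 -> y' h = y h.
Proof.
move=> Ay; have [J [iJ HJ]] := Ext_stab i.+1.
have [x [K A]] := Ay J; exists x; split => // j.
case: (leqP J j) => Jj.
  apply: HJ => //; exists x; split => //.
by apply: (Ext_mono (ltnW Jj)); exists x.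
Qed.

Lemma ML : injective sc ->
  exists N : {fset G}, forall x : cfg, (forall h, h \in N -> sc x h = 0) -> x 1%g = 0.
Proof.
move=> inj; apply: contrapT => Hn.
have Hx : forall N : {fset G}, exists x : cfg, (forall h, h \in N -> sc x h = 0) /\ x 1%g <> 0.
  move=> N; apply: contrapT => HN; apply: Hn; exists N => x Kx.
  apply: contrapT => x1; apply: HN; by exists x.
have [J0 [_ HJ0]] := Ext_stab 0.
have [x0 [Kx0 x01]] := Hx (Fb J0).
have A0 : Aall 0 x0.
  move=> j; case: (leqP J0 j) => Jj.
    by apply: HJ0 => //; exists x0.
  by apply: (Ext_mono (ltnW Jj)); exists x0.
have Hst : forall p : nat * cfg, exists y', Aall p.1 p.2 ->
   Aall p.1.+1 y' /\ forall h, h \in Fb p.1.+1 -> y' h = p.2 h.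
  move=> [i y] /=; case: (pselect (Aall i y)) => [Ay|nAy].
    by have [y' Hy'] := Aall_step Ay; exists y'.
  by exists y.
have [nx Hnx] := boolp.choice Hst.
pose fix ys i : cfg := if i is i'.+1 then nx (i', ys i') else x0.
have Ays : forall i, Aall i (ys i).
  by elim => [|i IH] //=; have [] := Hnx (i, ys i) IH.
have ag1 : forall i h, h \in Fb i.+1 -> ys i.+1 h = ys i h.
  by move=> i h hF /=; have [_ ] := Hnx (i, ys i) (Ays i); apply.
have ag : forall i d h, h \in Fb i.+1 -> ys (i + d)%N h = ys i h.
  move=> i d h hF; elim: d => [|d IH]; first by rewrite addn0.
  rewrite addnS ag1 // (F_monoP _ hF) //.
  by rewrite ltnS leq_addr.
pose z : cfg := fun h => match pselect (exists i, h \in Fb i) with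
  | left P => ys (ex_minn P) h | right _ => 0 end.
have zE : forall i h, h \in Fb i.+1 -> z h = ys i h.
  move=> i h hF; rewrite /z; case: pselect => [P|nP]; last by case: nP; exists i.+1.
  case: ex_minnP => i0 hi0 mi0.
  case: (leqP i0 i) => ii.
    by rewrite -(subnKC ii) ag // (F_monoP _ hi0).
  have e : i0 = i.+1 by apply/eqP; rewrite eqn_leq ii mi0.
  by rewrite e ag1.
have sz : sc z = 0.
  rewrite /config; apply/funext => g; rewrite cfg0.
  case: (pselect (exists i, g \in Fb i)) => [[i gi]|ng].
    rewrite (@sc_local_F i z (ys i) g gi); last by move=> h hF; rewrite (zE i).
    have [x [Kx Ax]] := Ays i i.
    by rewrite -(Kx g gi); apply: sc_local_F gi _ => h hF; rewrite Ax.
  rewrite -[RHS](f_equal (fun f => f g) (sigma0 (fun _ => c))).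
  apply: sigma_local => m mM; rewrite cfg0 /z; case: pselect => // -[i P].
  by case: ng; exists i.+1; apply: F_div P mM.
have : z = 0 by apply: inj; rewrite sz sigma0.
move=> /(f_equal (fun f => f 1%g)); rewrite cfg0 (zE 0 1%g (one_F 1)) /=.
exact: x01.
Qed.

End ML.

Section PartB.
Variables (G : groupType) (k : fieldType) (n : nat).
Local Notation Vn := (V k n).
Local Notation cfg := (config G k n).

Lemma left_inv_const (M : {fset G}) (c : Srule k n M) :
  injective (sigma (fun _ : G => c) : cfg -> cfg) ->
  exists (N : {fset G}) (psi : Srule k n N),
    forall x : cfg, sigma (fun _ => psi) (sigma (fun _ => c) x) = x.
Proof.
move=> injc; have [N HN] := ML injc.
pose sc := sigma (fun _ : G => c).
pose NM := [fset (a * b)%g | a in N, b in M]%fset.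
pose th (u : {ffun NM -> Vn}) : {ffun N -> Vn} := restr N (sc (ext u)).
have th_lin : linear th by move=> a u v; rewrite /th /sc ext_lin sigmaD sigmaZ restr_lin.
pose ev (u : {ffun NM -> Vn}) : Vn := ext u 1%g.
have ev_lin : linear ev by move=> a u v; rewrite /ev ext_lin.
pose Th := linfun (mkLin th_lin).
pose Ps := (linfun (mkLin ev_lin) \o Th^-1)%VF.
exists N, Ps.
have key : forall x : cfg, Ps (restr N (sc x)) = x 1%g.
  move=> x; set w := restr N (sc x).
  have wim : w \in limg Th.
    apply/memv_imgP; exists (restr NM x); first exact: memvf.
    rewrite lfunE mkLinE /th; apply/ffunP => h; rewrite !ffunE.
    apply: sigma_local => m mM; rewrite ext_restr //.
    by apply/imfset2P; exists (val h); [exact: fsvalP|exists m].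
  have := limg_lfunVK wim; set v := (Th^-1)%VF w => Thv.
  rewrite comp_lfunE lfunE mkLinE /ev -/v.
  apply/eqP; rewrite -subr_eq0; apply/eqP; rewrite -cfgB; apply: HN => h hN.
  rewrite sigmaB cfgB; apply/eqP; rewrite subr_eq0; apply/eqP.
  move/ffunP: Thv => /(_ [` hN]%fset); rewrite lfunE mkLinE /th /w !ffunE /=.
  by [].
move=> x; rewrite /config; apply/funext => g.
rewrite {1}/sigma -sigma_const_shift.
have := key (shift g^-1%g x); rewrite {2}/shift invgK mulg1 => <-.
by [].
Qed.

Lemma LNUCA_const (M : {fset G}) (c : Srule k n M) :
  LNUCA_c (sigma (fun _ : G => c) : cfg -> cfg).
Proof. by exists M, (fun _ => c); split => //; exists fset0, c. Qed.

Lemma part_ii_i :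
  infinite_set [set: G] -> LNUCA_c_directly_finite G k n ->
  (forall (M : {fset G}) (s : G -> Srule k n M),
       const_off_finite s -> stably_injective s -> (forall y, exists x, sigma s x = y)).
Proof.
move=> inf DF M s [E [c Hc]] SI.
pose sc := (sigma (fun _ : G => c) : cfg -> cfg).
pose ss := (sigma s : cfg -> cfg).
have injs : injective ss.
  apply: SI => F; exists 1%g => h _; by rewrite /shift_rule invg1 mul1g.
have injc : injective sc.
  apply: SI => F.
  have [g gN] := exists_notin inf [fset (h * e^-1)%g | h in F, e in E]%fset.
  exists g => h hF; rewrite /shift_rule Hc //; apply: contra gN => gE.
  apply/imfset2P; exists h => //; exists (g^-1 * h)%g => //.
  by rewrite invgM invgK mulVKg.
have [N [psi Hpsi]] := left_inv_const injc.
pose tau := (sigma (fun _ : G => psi) : cfg -> cfg).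
have ct : forall y, sc (tau y) = y.
  exact: (DF tau sc (LNUCA_const psi) (LNUCA_const c) Hpsi).
pose Dl x : cfg := ss x - sc x.
have DlE : forall x g, g \notin E -> Dl x g = 0.
  move=> x g gE; rewrite /Dl cfgB /ss /sc /sigma Hc //; exact: subrr.
have Dl_lin : forall a x y, Dl (a *: x + y) = a *: Dl x + Dl y.
  move=> a x y; rewrite /Dl /ss /sc !sigmaD !sigmaZ.
  by rewrite scalerBr opprD !addrA; congr (_ + _); rewrite addrAC.
pose P x := tau (Dl x).
have P_lin : forall a x y, P (a *: x + y) = a *: P x + P y.
  by move=> a x y; rewrite /P Dl_lin /tau sigmaD sigmaZ.
pose Q := [fset (e * m^-1)%g | e in E, m in N]%fset.
have PQ : forall x g, g \notin Q -> P x g = 0.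
  move=> x g gQ; rewrite /P /tau /sigma.
  have -> : restr N (shift g^-1%g (Dl x)) = 0.
    apply/ffunP => m; rewrite restr_shift ffunE DlE //.
    apply: contra gQ => gmE; apply/imfset2P; exists (g * val m)%g => //.
    by exists (val m); [exact: fsvalP| rewrite mulgK].
  exact: linear0.
have sP : forall x, ss x = sc (x + P x).
  move=> x; rewrite /sc sigmaD -/sc ct /P /Dl.
  by rewrite addrC subrK.
pose T (u : {ffun Q -> Vn}) : {ffun Q -> Vn} := restr Q (ext u + P (ext u)).
have T_lin : linear T.
  move=> a u v; rewrite /T ext_lin P_lin.
  rewrite -restr_lin; congr (restr Q _).
  by rewrite scalerDr !addrA; congr (_ + _); rewrite addrAC.
pose Tl := linfun (mkLin T_lin).
have Tinj : lker Tl == 0%VS.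
  apply/lker0P => u1 u2; rewrite !lfunE !mkLinE => e.
  have e2 : ext u1 + P (ext u1) = ext u2 + P (ext u2).
    rewrite /config; apply/funext => g; rewrite !cfgD.
    case: (boolP (g \in Q)) => gQ.
      move/ffunP: e => /(_ [` gQ]%fset); rewrite /T !ffunE /=.
      by rewrite !cfgD.
    by rewrite !ext_out // !PQ.
  have : ss (ext u1) = ss (ext u2) by rewrite !sP e2.
  by move=> /injs /(f_equal (restr Q)); rewrite !restr_ext.
move=> y.
pose z := tau y.
pose zout : cfg := fun g => if g \in Q then 0 else z g.
pose w := restr Q z - restr Q (P zout).
pose u := ((Tl^-1)%VF w).
have Tu : T u = w by have := lker0_lfunVK Tinj w; rewrite lfunE mkLinE.
exists (zout + ext u).
rewrite -/ss sP.
have -> : zout + ext u + P (zout + ext u) = z.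
  have -> : P (zout + ext u) = P zout + P (ext u).
    by have := P_lin 1 zout (ext u); rewrite !scale1r.
  rewrite /config; apply/funext => g; rewrite !cfgD.
  case: (boolP (g \in Q)) => gQ.
    move/ffunP: Tu => /(_ [` gQ]%fset); rewrite /T /w !ffunE /= cfgD => E1.
    by rewrite /zout gQ add0r addrCA E1 addrC subrK.
  by rewrite /zout (negbTE gQ) ext_out // !PQ // !addr0.
exact: ct.
Qed.

End PartB.

Section PartC.
Variables (G : groupType) (k : fieldType) (n : nat).
Local Notation Vn := (V k n).
Local Notation cfg := (config G k n).
Local Notation D1 := (D1 G k).
Local Notation mx := (mxD1 G k n).

Definition coef (a : D1) (g t : G) : k := a.1 t + a.2 g t.

Definition Psi (A : mx) (x : cfg) : cfg := fun g =>
  \row_(i < n) \sum_(j < n) \sum_(t \in [set: G]) coef (A i j) g t * x (g * t)%g 0 j.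

Lemma fin_cover (T : choiceType) (P : set T) :
  finite_set P -> exists S : {fset T}, forall x, P x -> x \in S.
Proof. by move=> fP; exists (fset_set P) => x Px; rewrite in_fset_set // inE. Qed.

Lemma inD1_supp (a : D1) : inD1 a ->
  exists S E : {fset G}, (forall g t, t \notin S -> a.1 t = 0 /\ a.2 g t = 0) /\
                        (forall g, g \notin E -> forall t, a.2 g t = 0).
Proof.
move=> [f1 [f2 f3]].
have [S1 HS1] := fin_cover f1; have [E HE] := fin_cover f2.
have [SF HSF] := boolp.choice (fun g => fin_cover (f3 g)).
have HE' : forall g, g \notin E -> forall t, a.2 g t = 0.
  move=> g gE t; apply: contrapT => nz; move: gE; rewrite HE //= => e.
  by apply: nz; rewrite e.
exists (S1 `|` (\bigcup_(g <- E) SF g)%fset)%fset, E; split => // g t.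
rewrite inE negb_or => /andP [tS1 tS2]; split.
  by apply/eqP; apply: contraNT tS1 => nz; apply: HS1.
case: (boolP (g \in E)) => gE; last by apply: HE'.
apply/eqP; apply: contraNT tS2 => nz; apply/bigfcupP; exists g; first by rewrite gE.
exact: HSF.
Qed.

Lemma mx_supp (A : mx) : in_mxD1 A ->
  exists S E : {fset G}, (forall i j g t, t \notin S -> (A i j).1 t = 0 /\ (A i j).2 g t = 0) /\
                        (forall i j g, g \notin E -> forall t, (A i j).2 g t = 0).
Proof.
move=> HA.
have [f Hf] := boolp.choice (fun p : 'I_n * 'I_n => inD1_supp (HA p.1 p.2)).
have [f' Hf'] := boolp.choice (fun p : 'I_n * 'I_n => Hf p).
exists (\bigcup_(p <- enum {: 'I_n * 'I_n}) f p)%fset,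
       (\bigcup_(p <- enum {: 'I_n * 'I_n}) f' p)%fset; split.
  move=> i j g t tS; have [H1 _] := Hf' (i, j); apply: H1.
  apply: contra tS => tf; apply/bigfcupP; exists (i, j) => //.
  by rewrite mem_enum.
move=> i j g gE t; have [_ H2] := Hf' (i, j); apply: H2.
apply: contra gE => tf; apply/bigfcupP; exists (i, j) => //.
by rewrite mem_enum.
Qed.

End PartC.

Section PartC2.
Variables (G : groupType) (k : fieldType) (n : nat).
Local Notation Vn := (V k n).
Local Notation cfg := (config G k n).
Local Notation D1 := (D1 G k).
Local Notation mx := (mxD1 G k n).
Local Notation coef := (@coef G k).
Local Notation Psi := (@Psi G k n).

Lemma big_coef (F : 'I_n -> D1) g t :
  coef (\big[@D1_add G k/@D1_zero G k]_(l < n) F l) g t = \sum_(l < n) coef (F l) g t.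
Proof.
elim/big_rec2: _ => [|l d s _ <-]; first by rewrite /coef /= addr0.
by rewrite /coef /D1_add /kGG_add /kG_add /= addrACA.
Qed.

Lemma big_snd (F : 'I_n -> D1) g t :
  (\big[@D1_add G k/@D1_zero G k]_(l < n) F l).2 g t = \sum_(l < n) (F l).2 g t.
Proof. by elim/big_rec2: _ => [|l d s _ <-]. Qed.

Lemma coef_mul_fin (a b : D1) (S : {fset G}) g w :
  (forall g t, t \notin S -> a.1 t = 0 /\ a.2 g t = 0) ->
  coef (D1_mul a b) g w = \sum_(t <- S) coef a g t * coef b (g * t)%g (t^-1 * w)%g.
Proof.
move=> HS.
rewrite /coef /D1_mul /= /kGG_add /kG_add /kG_mul /mul_ab /mul_ba /mul_bb.
rewrite !(fsbigTE S); try by move=> t tS; have [h1 h2] := HS g t tS; rewrite ?h1 ?h2 mul0r.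
rewrite -!big_split /=; apply: eq_bigr => t _.
by rewrite mulrDl !mulrDr !addrA.
Qed.

Lemma PsiE (A : mx) (x : cfg) g i :
  Psi A x g 0 i = \sum_(j < n) \sum_(t \in [set: G]) coef (A i j) g t * x (g * t)%g 0 j.
Proof. by rewrite /Psi mxE. Qed.

Lemma PsiES (A : mx) (S : {fset G}) (x : cfg) g i :
  (forall i j g t, t \notin S -> coef (A i j) g t = 0) ->
  Psi A x g 0 i = \sum_(j < n) \sum_(t <- S) coef (A i j) g t * x (g * t)%g 0 j.
Proof.
move=> HS; rewrite PsiE; apply: eq_bigr => j _; rewrite (fsbigTE S) //.
by move=> t tS; rewrite HS // mul0r.
Qed.

Lemma supp_coef (A : mx) (S : {fset G}) :
  (forall i j g t, t \notin S -> (A i j).1 t = 0 /\ (A i j).2 g t = 0) ->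
  (forall i j g t, t \notin S -> coef (A i j) g t = 0).
Proof. by move=> H i j g t tS; have [h1 h2] := H i j g t tS; rewrite /coef h1 h2 addr0. Qed.

Lemma reindex_fin (SA SB : {fset G}) (t : G) (F : G -> k) :
  t \in SA -> (forall u, u \notin SB -> F u = 0) ->
  \sum_(w <- [fset (a * b)%g | a in SA, b in SB]%fset) F (t^-1 * w)%g = \sum_(u <- SB) F u.
Proof.
move=> tSA HF.
rewrite -(fsbigTE _ (fun w => F (t^-1 * w)%g)); last first.
  move=> w wW; apply: HF; apply: contra wW => wS.
  by apply/imfset2P; exists t => //; exists (t^-1 * w)%g => //; rewrite mulVKg.
rewrite -(fsbigTE SB) //.
rewrite [LHS](reindex_fsbigT (fun u => t * u)%g); last first.
  by exists (fun u => t^-1 * u)%g => u; rewrite ?mulKg ?mulVKg.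
by apply: eq_fsbigr => u _ /=; rewrite mulKg.
Qed.

Lemma Psi_mul (A B : mx) : in_mxD1 A -> in_mxD1 B ->
  forall x, Psi (mxD1_mul A B) x = Psi A (Psi B x).
Proof.
move=> HA HB x; have [SA [EA [HSA _]]] := mx_supp HA; have [SB [EB [HSB _]]] := mx_supp HB.
have cA := supp_coef HSA; have cB := supp_coef HSB.
set W := [fset (a * b)%g | a in SA, b in SB]%fset.
have cAB : forall i j g w, coef (mxD1_mul A B i j) g w =
    \sum_(l < n) \sum_(t <- SA) coef (A i l) g t * coef (B l j) (g * t)%g (t^-1 * w)%g.
  move=> i j g w; rewrite /mxD1_mul big_coef; apply: eq_bigr => l _.
  apply: coef_mul_fin => g' t tS; exact: HSA.
have HW : forall i j g w, w \notin W -> coef (mxD1_mul A B i j) g w = 0.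
  move=> i j g w wW; rewrite cAB big1 // => l _; rewrite big1_seq // => t /andP [_ tS].
  rewrite cB ?mulr0 //; apply: contra wW => wS.
  by apply/imfset2P; exists t => //; exists (t^-1 * w)%g => //; rewrite mulVKg.
rewrite /config; apply/funext => g; apply/rowP => i.
rewrite (PsiES _ _ _ HW) (PsiES _ _ _ cA).
under eq_bigr => j _ do under eq_bigr => w _ do rewrite cAB mulr_suml.
under eq_bigr => j _ do under eq_bigr => w _ do under eq_bigr => l _ do rewrite mulr_suml.
under eq_bigr => j _ do rewrite exchange_big.
under eq_bigr => j _ do under eq_bigr => l _ do rewrite exchange_big.
rewrite exchange_big; apply: eq_bigr => l _.
rewrite exchange_big /=; apply: eq_big_seq => t tSA.
rewrite (PsiES _ _ _ cB) mulr_sumr; apply: eq_bigr => j _.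
rewrite mulr_sumr.
rewrite -(@reindex_fin SA SB t (fun u => coef (A i l) g t *
   (coef (B l j) (g * t)%g u * x (g * t * u)%g 0 j)) tSA); last first.
  by move=> u uS; rewrite cB ?mul0r ?mulr0.
apply: eq_bigr => w _ /=.
by rewrite -mulgA mulVKg mulrA.
Qed.

End PartC2.

Section PartC3.
Variables (G : groupType) (k : fieldType) (n : nat).
Local Notation Vn := (V k n).
Local Notation cfg := (config G k n).
Local Notation D1 := (D1 G k).
Local Notation mx := (mxD1 G k n).
Local Notation coef := (@coef G k).
Local Notation Psi := (@Psi G k n).

Lemma Psi_one (x : cfg) : Psi (@mxD1_one G k n) x = x.
Proof.
rewrite /config; apply/funext => g; apply/rowP => i.
rewrite (PsiES _ (S := [fset 1%g]%fset)); last first.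
  move=> i' j g' t; rewrite inE => /negbTE t1.
  by rewrite /coef /mxD1_one; case: eqP => _ /=; rewrite ?t1 addr0.
under eq_bigr do rewrite big_seq_fset1 mulg1.
rewrite (bigD1 i) //= big1 ?addr0.
  rewrite /coef /mxD1_one /D1_one /= !eqxx /= addr0.
  by case: eqP => [_|//]; rewrite mul1r.
move=> j ji; rewrite /coef /mxD1_one eq_sym (negbTE ji) /=.
by rewrite addr0 mul0r.
Qed.

Definition dl (h : G) (j : 'I_n) : cfg := fun y => if y == h then delta_mx 0 j else 0.

Lemma Psi_delta (A : mx) h j g i : Psi A (dl h j) g 0 i = coef (A i j) g (g^-1 * h)%g.
Proof.
have e : forall j', \sum_(t \in [set: G]) coef (A i j') g t * dl h j (g * t)%g 0 j' =
    coef (A i j') g (g^-1 * h)%g * ((j == j')%:R).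
  move=> j'; rewrite (fsbigTE [fset (g^-1 * h)%g]%fset).
    rewrite big_seq_fset1 mulVKg /dl; case: eqP => [_|//].
    by rewrite mxE eqxx eq_sym.
  move=> t; rewrite inE => tn; rewrite /dl; case: eqP => [e|_]; last first.
    by rewrite mxE mulr0.
  by case/eqP: tn; rewrite -e mulKg.
rewrite PsiE (eq_bigr _ (fun j' _ => e j')).
rewrite (bigD1 j) //= eqxx mulr1 big1 ?addr0 // => j' jj.
by rewrite eq_sym (negbTE jj) mulr0.
Qed.

Definition wk (A : mx) := exists E : {fset G}, forall i j g, g \notin E -> forall t, (A i j).2 g t = 0.

Lemma in_wk (A : mx) : in_mxD1 A -> wk A.
Proof. by move=> HA; have [S [E [_ HE]]] := mx_supp HA; exists E. Qed.

Lemma wk_one : wk (@mxD1_one G k n).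
Proof. by exists fset0 => i j g _ t; rewrite /mxD1_one; case: eqP. Qed.

Lemma Psi_inj (A A' : mx) : infinite_set [set: G] -> wk A -> wk A' ->
  (forall x, Psi A x = Psi A' x) -> A = A'.
Proof.
move=> inf [E HE] [E' HE'] H.
have hc : forall i j g t, coef (A i j) g t = coef (A' i j) g t.
  move=> i j g t; rewrite -(mulKg g t) -!Psi_delta; by rewrite H.
have [g0 g0E] := exists_notin inf (E `|` E')%fset.
have h1 : forall i j t, (A i j).1 t = (A' i j).1 t.
  move=> i j t; have := hc i j g0 t; rewrite /coef HE ?HE' ?addr0 //;
    by apply: contra g0E; rewrite inE => ->; rewrite ?orbT.
apply/funext => i; apply/funext => j.
rewrite [A i j]surjective_pairing [A' i j]surjective_pairing; congr pair.
  by apply/funext => t; apply: h1.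
apply/funext => g; apply/funext => t.
by have := hc i j g t; rewrite /coef h1 => /addrI.
Qed.

Lemma wk_mul (A B : mx) : in_mxD1 A -> in_mxD1 B -> wk (mxD1_mul A B).
Proof.
move=> HA HB; have [SA [EA [HSA HEA]]] := mx_supp HA; have [SB [EB [HSB HEB]]] := mx_supp HB.
exists (EA `|` [fset (e * s^-1)%g | e in EB, s in SA])%fset => i j g gE t.
have gEA : g \notin EA by apply: contra gE; rewrite inE => ->.
rewrite big_snd big1 // => l _.
rewrite /D1_mul /kGG_add /kG_add /= /mul_ab /mul_ba /mul_bb.
rewrite !fsbig1 ?addr0 //.
- by move=> t' _; rewrite HEA // mul0r.
- by move=> t' _; rewrite HEA // mul0r.
move=> t' _; case: (boolP (t' \in SA)) => tS; last by have [-> _] := HSA i l g t' tS; rewrite mul0r.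
rewrite HEB ?mulr0 //; apply: contra gE => gtE; rewrite inE; apply/orP; right.
by apply/imfset2P; exists (g * t')%g => //; exists t' => //; rewrite mulgK.
Qed.

Definition rulef (S : {fset G}) (cf : 'I_n -> 'I_n -> G -> k) (r : {ffun S -> Vn}) : Vn :=
  \row_i \sum_(j < n) \sum_(t <- S) cf i j t * ext r t 0 j.

Lemma rulef_lin S cf : linear (@rulef S cf).
Proof.
move=> a r1 r2; apply/rowP => i; rewrite !mxE mulr_sumr -big_split; apply: eq_bigr => j _.
rewrite mulr_sumr -big_split; apply: eq_bigr => t _.
by rewrite ext_lin cfgD cfgZ !mxE mulrDr mulrCA.
Qed.

Lemma LN_Psi (A : mx) : in_mxD1 A -> LNUCA_c (Psi A).
Proof.
move=> HA; have [S [E [HS HE]]] := mx_supp HA.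
pose cg g := fun i j t => coef (A i j) g t.
pose c0 := fun i j t => (A i j).1 t.
pose s g : Srule k n S := if g \in E then mkLin (@rulef_lin S (cg g)) else mkLin (@rulef_lin S c0).
exists S, s; split.
  by exists E, (mkLin (@rulef_lin S c0)) => g gE; rewrite /s (negbTE gE).
move=> x; rewrite /config; apply/funext => g; apply/rowP => i.
rewrite (PsiES _ _ _ (supp_coef HS)) /sigma /s.
case: ifP => gE; rewrite mkLinE /rulef mxE; apply: eq_bigr => j _; apply: eq_big_seq => t tS;
  rewrite ext_restr // /shift invgK //.
by rewrite /cg /c0 /coef HE ?gE // addr0.
Qed.

Definition del (M : {fset G}) (m : M) (j : 'I_n) : {ffun M -> Vn} :=
  [ffun m' => if m' == m then delta_mx 0 j else 0].

Definition cr (M : {fset G}) (r : Srule k n M) (i j : 'I_n) (t : G) : k :=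
  if insub t is Some m then r (del m j) 0 i else 0.

Lemma cr_out (M : {fset G}) (r : Srule k n M) i j t : t \notin M -> cr r i j t = 0.
Proof. by move=> tM; rewrite /cr insubN. Qed.

Lemma rule_expand (M : {fset G}) (r : Srule k n M) (u : {ffun M -> Vn}) i :
  r u 0 i = \sum_(j < n) \sum_(t <- M) cr r i j t * ext u t 0 j.
Proof.
have ud : u = \sum_(m : M) \sum_(j < n) u m 0 j *: del m j.
  apply/ffunP => m'; rewrite sum_ffunE (bigD1 m') //= sum_ffunE.
  rewrite [X in _ + X]big1 => [|m mm]; last first.
    by rewrite sum_ffunE big1 // => j _; rewrite !ffunE eq_sym (negbTE mm) scaler0.
  rewrite addr0 {1}[u m']row_sum_delta; apply: eq_bigr => j _.
  by rewrite !ffunE eqxx.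
rewrite {1}ud !raddf_sum summxE.
under eq_bigr do rewrite raddf_sum summxE.
rewrite exchange_big; apply: eq_bigr => j _.
rewrite big_seq_fsetE /=; apply: eq_bigr => m _.
by rewrite linearZ mxE /cr valK ext_val mulrC.
Qed.

Lemma Psi_surj (tau : cfg -> cfg) : LNUCA_c tau ->
  exists A : mx, in_mxD1 A /\ forall x, tau x = Psi A x.
Proof.
move=> [M [s [[E [c Hc]] Ht]]].
pose A : mx := fun i j => ((fun t => cr c i j t), (fun g t => cr (s g) i j t - cr c i j t)).
exists A; split.
  move=> i j; split.
    by apply: (finite_subfset M) => t /= nz; apply: contraNT nz => tM; rewrite cr_out.
  split.
    apply: (finite_subfset E) => g /= nz; apply: contrapT => gE; apply: nz.
    by apply/funext => t; rewrite Hc ?subrr //; apply/negP.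
  move=> g; apply: (finite_subfset M) => t /= nz; apply: contraNT nz => tM.
  by rewrite !cr_out // subrr.
move=> x; rewrite Ht /config; apply/funext => g; apply/rowP => i.
rewrite (PsiES (S := M)); last by move=> i' j g' t tM; rewrite /coef /A /= !cr_out // subrr addr0.
rewrite /sigma rule_expand; apply: eq_bigr => j _; apply: eq_big_seq => t tM.
by rewrite /coef /A /= addrC subrK ext_restr // /shift invgK.
Qed.

Lemma part_ii_iii : infinite_set [set: G] ->
  LNUCA_c_directly_finite G k n -> mxD1_directly_finite G k n.
Proof.
move=> inf DF A B HA HB AB.
have m1 : forall x, Psi A (Psi B x) = x by move=> x; rewrite -Psi_mul // AB Psi_one.
have m2 := DF (Psi A) (Psi B) (LN_Psi HA) (LN_Psi HB) m1.
apply: Psi_inj inf (wk_mul HB HA) wk_one _ => x.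
by rewrite Psi_mul // m2 Psi_one.
Qed.

Lemma part_iii_ii : infinite_set [set: G] ->
  mxD1_directly_finite G k n -> LNUCA_c_directly_finite G k n.
Proof.
move=> inf MDF a b La Lb ab x.
have [A [HA EA]] := Psi_surj La; have [B [HB EB]] := Psi_surj Lb.
have AB1 : mxD1_mul A B = @mxD1_one G k n.
  apply: Psi_inj inf (wk_mul HA HB) wk_one _ => y.
  by rewrite Psi_mul // Psi_one -EB -EA ab.
have BA1 := MDF A B HA HB AB1.
by rewrite EB EA -Psi_mul // BA1 Psi_one.
Qed.

End PartC3.

Theorem theorem7p2 (G : groupType) (k : fieldType) (n : nat) :
  infinite_set [set: G] -> (1 <= n)%N ->
  ((forall (M : {fset G}) (s : G -> Srule k n M),
       const_off_finite s -> stably_injective s -> (forall y, exists x, sigma s x = y))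
   <-> LNUCA_c_directly_finite G k n)
  /\ (LNUCA_c_directly_finite G k n <-> mxD1_directly_finite G k n).
Proof.
move=> inf _; split; split.
- exact: part_i_ii inf.
- exact: part_ii_i inf.
- exact: part_ii_iii inf.
- exact: part_iii_ii inf.
Qed.
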